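(* Let $l\geq 2$ be an integer and let $n=\binom{2l+1}{l}+1$. Then $\chi'_2(\overleftrightarrow{K_n})<\chi'_{1,2}(\overleftrightarrow{K_n})$.
   Context: For a simple graph $G$, the symmetric digraph $\overleftrightarrow{G}$ is obtained by replacing each edge $uv$ of $G$ by the pair of opposite arcs $\overrightarrow{uv}$ and $\overrightarrow{vu}$; $K_n$ is the complete graph on $n$ vertices. A monochromatic 2-path is a pair of arcs $\overrightarrow{uv},\overrightarrow{vw}$ with $w\neq u$ of the same colour; a monochromatic 2-cycle is a pair $\overrightarrow{uv},\overrightarrow{vu}$ of the same colour. $\chi'_{1,2}(\overleftrightarrow{G})$ is the least number of colours in an arc-colouring of $\overleftrightarrow{G}$ with no monochromatic 2-cycles and no monochromatic 2-paths; $\chi'_{2}(\overleftrightarrow{G})$ is the least number of colours in an arc-colouring with no monochromatic 2-paths. *)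

(* Defs.v *)
From mathcomp Require Import all_boot.
Set Implicit Arguments. Unset Strict Implicit. Unset Printing Implicit Defensive.

(* An arc-colouring of <->K_n with k colours: a colour c (u,v) : 'I_k for each
   ordered pair (u,v); only pairs with u != v (the arcs) are relevant. *)
Definition arc_colouring (n k : nat) := {ffun 'I_n * 'I_n -> 'I_k}.

Definition no_mono_2path n k (c : arc_colouring n k) : bool :=
  [forall u : 'I_n, forall v : 'I_n, forall w : 'I_n,
     [&& u != v, v != w & w != u] ==> (c (u, v) != c (v, w))].

Definition no_mono_2cycle n k (c : arc_colouring n k) : bool :=
  [forall u : 'I_n, forall v : 'I_n, (u != v) ==> (c (u, v) != c (v, u))].

Definition col2 n k : bool := [exists c : arc_colouring n k, no_mono_2path c].
Definition col12 n k : bool :=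
  [exists c : arc_colouring n k, no_mono_2path c && no_mono_2cycle c].

Lemma col12_ex n : exists k, col12 n k.
Proof.
exists #|{: 'I_n * 'I_n}|; apply/existsP.
exists [ffun p => enum_rank p]; apply/andP; split.
- apply/forallP => u; apply/forallP => v; apply/forallP => w; apply/implyP.
  case/and3P => uv _ _; rewrite !ffunE; apply: contra uv.
  by move/eqP/enum_rank_inj => [-> _].
- apply/forallP => u; apply/forallP => v; apply/implyP => uv; rewrite !ffunE.
  by apply: contra uv => /eqP/enum_rank_inj [-> _].
Qed.

Lemma col2_ex n : exists k, col2 n k.
Proof.
case: (col12_ex n) => k /existsP [c /andP [h _]].
by exists k; apply/existsP; exists c.
Qed.

Definition chi2_Kn n : nat := ex_minn (col2_ex n).
Definition chi12_Kn n : nat := ex_minn (col12_ex n).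

(* Main.v *)
Require Import Defs.
From mathcomp Require Import all_boot zify.
Set Implicit Arguments. Unset Strict Implicit. Unset Printing Implicit Defensive.

Section LYM.
Variable T : finType.
Variable F : {set {set T}}.
Hypothesis antiF : forall A B, A \in F -> B \in F -> A \subset B -> A = B.

Definition wt (X A : {set T}) := #|A|`! * (#|X| - #|A|)`!.

Lemma lym_inF (X : {set T}) : X \in F ->
  \sum_(A in F | A \subset X) wt X A = #|X|`!.
Proof.
move=> XF; rewrite (bigD1 X) /= ?XF ?subxx // big1 ?addn0.
  by rewrite /wt subnn fact0 muln1.
move=> A /andP [/andP [AF AX] AnX]; exfalso.
by move: AnX; rewrite (antiF AF XF AX) eqxx.
Qed.

Lemma lym n (X : {set T}) : #|X| = n -> \sum_(A in F | A \subset X) wt X A <= n`!.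
Proof.
elim: n X => [|n IH] X cX.
  case XF: (X \in F); first by rewrite lym_inF // cX.
  rewrite big1 // => A /andP [AF AX]; exfalso.
  have X0 : X = set0 by apply/eqP; rewrite -cards_eq0 cX.
  have : A = X by apply/eqP; rewrite eqEsubset AX X0 sub0set.
  by move=> AX'; move: XF; rewrite -AX' AF.
case XF: (X \in F); first by rewrite lym_inF // cX.
have step : forall A, A \in F -> A \subset X ->
   wt X A = \sum_(x in X :\: A) wt (X :\ x) A.
  move=> A AF AX.
  have AnX : A != X by apply: contraFneq XF => <-.
  have ltA : #|A| < #|X|.
    by rewrite ltn_neqAle (subset_leq_card AX) andbT; apply: contra AnX => /eqP h; rewrite eqEcard AX h leqnn.
  rewrite /wt.
  have cXx : forall x, x \in X -> #|X :\ x| = n.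
    by move=> x xX; move: (cardsD1 x X); rewrite xX cX add1n => -[].
  rewrite cX in ltA *.
  rewrite (eq_bigr (fun _ => #|A|`! * (n - #|A|)`!)); last first.
    by move=> x /setDP [xX _]; rewrite cXx.
  by rewrite sum_nat_const cardsDS // cX subSn // factS mulnCA.
rewrite (eq_bigr (fun A => \sum_(x in X :\: A) wt (X :\ x) A)); last first.
  by move=> A /andP [AF AX]; exact: step.
rewrite (exchange_big_dep (mem X)) /=; last by move=> A x _ /setDP [].
apply: (@leq_trans (\sum_(x in X) n`!)).
  apply: leq_sum => x xX.
  have cXx : #|X :\ x| = n by move: (cardsD1 x X); rewrite xX cX add1n => -[].
  apply: leq_trans (IH _ cXx).
  apply: eq_leq; apply: eq_bigl => A.
  by rewrite subsetD1 in_setD xX andbT andbA.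
by rewrite sum_nat_const cX factS.
Qed.
End LYM.

Lemma bin_up m k : k.+1 <= m - k -> 'C(m, k) <= 'C(m, k.+1).
Proof.
move=> h; rewrite -(@leq_pmul2l k.+1) // mul_bin_left.
by rewrite leq_mul2r h orbT.
Qed.

Lemma bin_max_low l k d : k + d <= l -> 'C(2*l+1, k) <= 'C(2*l+1, k + d).
Proof.
elim: d => [|d IH] h; first by rewrite addn0.
apply: leq_trans (IH _) _; first lia.
rewrite [k + d.+1]addnS; apply: bin_up; lia.
Qed.

Lemma bin_max l k : 'C(2*l+1, k) <= 'C(2*l+1, l).
Proof.
case: (leqP k l) => kl.
  by have := @bin_max_low l k (l - k); rewrite subnKC //; apply.
case: (leqP k (2*l+1)) => km; last by rewrite bin_small.
rewrite -bin_sub //.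
have h : 2 * l + 1 - k <= l by lia.
by have := @bin_max_low l (2*l+1-k) (l - (2*l+1-k)); rewrite subnKC //; apply.
Qed.

Lemma sperner l (F : {set {set 'I_(2*l+1)}})
  (antiF : forall A B, A \in F -> B \in F -> A \subset B -> A = B) :
  #|F| <= 'C(2*l+1, l).
Proof.
set m := 2*l+1.
have cT : #|[set: 'I_m]| = m by rewrite cardsT card_ord.
have := lym antiF cT.
set w := l`! * (l.+1)`!.
have wpos : 0 < w by rewrite muln_gt0 !fact_gt0.
have hw : 'C(m, l) * w = m`!.
  have e : m - l = l.+1 by rewrite /m; lia.
  by rewrite /w -e bin_fact // /m; lia.
have wt_ge : forall A, w <= wt [set: 'I_m] A.
  move=> A; rewrite /wt cT.
  have km : #|A| <= m by apply: leq_trans (max_card _) _; rewrite card_ord.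
  rewrite -(@leq_pmul2l 'C(m, #|A|)) ?bin_gt0 // bin_fact // -hw.
  by rewrite leq_mul2r bin_max orbT.
have hs : \sum_(A in F | A \subset [set: 'I_m]) w = #|F| * w.
  by rewrite -sum_nat_const; apply: eq_bigl => A; rewrite subsetT andbT.
move=> hl; rewrite -(@leq_pmul2r w) // hw -hs.
by apply: leq_trans hl; apply: leq_sum => A _; apply: wt_ge.
Qed.

Definition toI l (x : nat) : 'I_(2*l+1) := cast_ord (esym (addn1 (2*l))) (inord x).
Lemma toIK l x : x < 2*l+1 -> val (toI l x) = x.
Proof. by move=> h; rewrite /= inordK // -(addn1 (2*l)). Qed.

Lemma n_le l : 'C(2*l+1, l) + 1 <= 2 * 'C(2*l, l).
Proof.
case: l => [|l]; first by [].
rewrite (addn1 (2 * l.+1)) binS.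
have h1 := mul_bin_left (2*l.+1) l.
have hp : 0 < 'C(2*l.+1, l.+1) by rewrite bin_gt0; lia.
have e : 2 * l.+1 - l = l.+2 by lia.
rewrite e in h1.
have : 'C(2 * l.+1, l) < 'C(2 * l.+1, l.+1).
  rewrite -(@ltn_pmul2l l.+2) // -h1 ltn_pmul2r //.
lia.
Qed.

Lemma mod3 M u v w : u < 2 * M -> v < 2 * M -> w < 2 * M ->
  u %% M = v %% M -> v %% M = w %% M -> u != v -> v != w -> w != u -> False.
Proof.
have h : forall x, x < 2 * M -> x = x %% M \/ x = x %% M + M.
  move=> x hx; rewrite {1 3}(divn_eq x M).
  have : x %/ M < 2.
    case: M hx => [|M] hx; first by rewrite divn0.
    by rewrite ltn_divLR.
  case: (x %/ M) => [|[|q]] //= _; [left|right]; lia.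
move=> hu hv hw e1 e2 uv vw wu.
have := h _ hu; have := h _ hv; have := h _ hw. lia.
Qed.

Lemma col2_yes l : col2 ('C(2*l+1, l) + 1) (2*l+1).
Proof.
set n := 'C(2*l+1, l) + 1.
set M := 'C(2*l, l).
have Mpos : 0 < M by rewrite bin_gt0; lia.
have nM : n <= 2 * M := n_le l.
set L := [set A : {set 'I_(2*l)} | #|A| == l].
have sL : size (enum L) = M by rewrite -cardE card_draws card_ord.
pose F (u : 'I_n) := nth set0 (enum L) (u %% M).
have FL : forall u, #|F u| = l.
  move=> u; have : F u \in enum L by rewrite mem_nth // sL ltn_pmod.
  by rewrite mem_enum inE => /eqP.
have Feq : forall u v, (F u == F v) = (u %% M == v %% M).
  by move=> u v; rewrite nth_uniq ?sL ?ltn_pmod ?enum_uniq.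
pose col (u v : 'I_n) : nat :=
  if u %% M == v %% M then 2 * l else odflt 0 (omap val [pick x in F u :\: F v]).
have colP : forall u v : 'I_n, (u %% M == v %% M) = false ->
    exists2 x : 'I_(2*l), x \in F u :\: F v & col u v = val x.
  move=> u v e; rewrite /col e.
  case: pickP => [x xP | none]; first by exists x.
  exfalso; move: e; rewrite -Feq eqEcard !FL leqnn andbT.
  move/negbT/negP; apply; apply/subsetP => x xu; apply/negPn/negP => xv.
  by move: (none x); rewrite inE xu xv.
have collt : forall u v : 'I_n, col u v < 2 * l + 1.
  move=> u v; case e: (u %% M == v %% M); first by rewrite /col e; lia.
  by case: (colP u v e) => x _ ->; exact: ltn_addr (ltn_ord x).
apply/existsP; exists [ffun p => toI l (col p.1 p.2)].
apply/forallP => u; apply/forallP => v; apply/forallP => w; apply/implyP.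
case/and3P => uv vw wu; rewrite !ffunE /=.
apply/negP => /eqP /(congr1 val); rewrite !toIK // => E.
case e1: (u %% M == v %% M); case e2: (v %% M == w %% M).
- have hn : forall z : 'I_n, z < 2*M by move=> z; apply: leq_trans (ltn_ord z) nM.
  exact: (mod3 (hn u) (hn v) (hn w) (eqP e1) (eqP e2) uv vw wu).
- case: (colP v w e2) => x _ ex; move: E; rewrite ex {1}/col e1 => E.
  by move: (ltn_ord x); rewrite -E ltnn.
- case: (colP u v e1) => x _ ex; move: E; rewrite ex /col e2 => E.
  by move: (ltn_ord x); rewrite E ltnn.
case: (colP u v e1) => x /setDP [_ xv] ex.
case: (colP v w e2) => y /setDP [yv _] ey.
move: E; rewrite ex ey => /val_inj xy.
by move: xv; rewrite xy yv.
Qed.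

Lemma no_col12 l k : k <= 2*l+1 -> ~~ col12 ('C(2*l+1, l) + 1) k.
Proof.
move=> hk; apply/negP => /existsP [c /andP [P2 P1]].
set m := 2*l+1 in hk *.
set N := 'C(m, l) + 1 in c P2 P1 *.
pose S (v : 'I_N) : {set 'I_m} :=
  [set j : 'I_m | [exists w : 'I_N, (w != v) && (val (c (v, w)) == val j)]].
have key : forall u v : 'I_N, u != v -> ~~ (S u \subset S v).
  move=> u v uv; apply/negP => sub.
  have cm : val (c (u, v)) < m by apply: leq_trans (ltn_ord _) hk.
  have : Ordinal cm \in S u.
    by rewrite inE; apply/existsP; exists v; rewrite eq_sym uv eqxx.
  move/(subsetP sub); rewrite inE => /existsP [w /andP [wv /eqP e]].
  have e' : c (v, w) = c (u, v) by apply: val_inj.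
  case: (eqVneq w u) => [wu | wu].
    move: P1 => /forallP /(_ u) /forallP /(_ v) /implyP /(_ uv).
    by rewrite -e' wu eqxx.
  move: P2 => /forallP /(_ u) /forallP /(_ v) /forallP /(_ w) /implyP.
  by rewrite uv eq_sym wv wu e' eqxx => /(_ isT).
have Sinj : injective S.
  move=> u v e; apply/eqP; apply/negPn/negP => uv.
  by move: (key u v uv); rewrite e subxx.
pose FF := [set S v | v in 'I_N].
have antiF : forall A B, A \in FF -> B \in FF -> A \subset B -> A = B.
  move=> A B /imsetP [u _ ->] /imsetP [v _ ->] sub.
  case: (eqVneq u v) => [-> // | uv].
  by move: (key u v uv); rewrite sub.
have := sperner antiF.
by rewrite card_imset // card_ord /N addn1 ltnn.
Qed.

Theorem proposition4p2 (l : nat) (hl : 2 <= l) :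
  let n := 'C(2 * l + 1, l) + 1 in chi2_Kn n < chi12_Kn n.
Proof.
cbv zeta; set n := 'C(2 * l + 1, l) + 1.
have h2 : chi2_Kn n <= 2 * l + 1.
  rewrite /chi2_Kn; case: ex_minnP => k _ hmin; apply: hmin; exact: col2_yes.
apply: leq_ltn_trans h2 _.
rewrite /chi12_Kn; case: ex_minnP => k hk _.
rewrite ltnNge; apply/negP => kle.
by move: (no_col12 kle); rewrite hk.
Qed.
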